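(* Let $n\ge4$ and for $1\le p\le n$ let $J_p$ be the set of regular elements of $\mathcal{ORCT}_n$ whose image has exactly $p$ elements. Then for all $1\le p\le n-2$, $\langle J_p\rangle\subseteq\langle J_{p+1}\rangle$, where $\langle A\rangle$ denotes the subsemigroup of $\mathcal{T}_n$ generated by $A$.
   Context: $\mathcal{T}_n$ is the full transformation semigroup on $[n]=\{1,\dots,n\}$ under composition. $\alpha$ is a contraction if $|x\alpha-y\alpha|\le|x-y|$ for all $x,y$; order-preserving if $x\le y\Rightarrow x\alpha\le y\alpha$; order-reversing if $x\le y\Rightarrow x\alpha\ge y\alpha$. $\mathcal{ORCT}_n$ is the semigroup of contractions that are order-preserving or order-reversing; $\alpha\in\mathcal{ORCT}_n$ is regular if $\alpha\beta\alpha=\alpha$ for some $\beta\in\mathcal{ORCT}_n$. *)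

(* Defs.v *)
(* [n] = {1..n} is represented by 'I_n = {0..n-1} (shift by one). *)
From mathcomp Require Import all_boot.
Set Implicit Arguments. Unset Strict Implicit. Unset Printing Implicit Defensive.

(* Full transformation semigroup T_n; maps written on the right: x(ab) = (xa)b. *)
Definition trans (n : nat) := {ffun 'I_n -> 'I_n}.

Definition tcomp (n : nat) (a b : trans n) : trans n := [ffun x => b (a x)].

Definition dist (x y : nat) : nat := (x - y) + (y - x).

Definition contraction (n : nat) (a : trans n) : Prop :=
  forall x y : 'I_n, dist (a x) (a y) <= dist x y.

Definition order_preserving (n : nat) (a : trans n) : Prop :=
  forall x y : 'I_n, x <= y -> a x <= a y.

Definition order_reversing (n : nat) (a : trans n) : Prop :=
  forall x y : 'I_n, x <= y -> a y <= a x.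

Definition ORCT (n : nat) (a : trans n) : Prop :=
  contraction a /\ (order_preserving a \/ order_reversing a).

Definition regular_ORCT (n : nat) (a : trans n) : Prop :=
  exists b : trans n, ORCT b /\ tcomp (tcomp a b) a = a.

Definition rank (n : nat) (a : trans n) : nat := #|[set a x | x : 'I_n]|.

Definition J (n p : nat) (a : trans n) : Prop :=
  ORCT a /\ regular_ORCT a /\ rank a = p.

Inductive generated (n : nat) (A : trans n -> Prop) : trans n -> Prop :=
  | gen_base a : A a -> generated A a
  | gen_mul a b : generated A a -> generated A b -> generated A (tcomp a b).

(* Main.v *)
Require Import Defs.
From mathcomp Require Import all_boot zify.
Set Implicit Arguments. Unset Strict Implicit. Unset Printing Implicit Defensive.

Definition clamp (x lo hi : nat) := minn (maxn x lo) hi.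
Definition shf (k p c : nat) (d : bool) (x : nat) : nat :=
  if d then c + clamp x k (k + p - 1) - k else c + (k + p - 1) - clamp x k (k + p - 1).
Definition shp n k p c d : trans n := [ffun x : 'I_n => insubd x (shf k p c d x)].

Lemma tcompE n (a b : trans n) x : tcomp a b x = b (a x).
Proof. by rewrite /tcomp ffunE. Qed.

Lemma shpE n k p c d (x : 'I_n) : 1 <= p -> k + p <= n -> c + p <= n ->
  val (shp n k p c d x) = shf k p c d x.
Proof.
move=> h1 h2 h3; rewrite ffunE val_insubd.
have hx := ltn_ord x.
have -> : shf k p c d x < n by rewrite /shf /clamp; case: d; lia.
by [].
Qed.

Lemma shp_ORCT n k p c d : 1 <= p -> k + p <= n -> c + p <= n -> ORCT (shp n k p c d).
Proof.
move=> h1 h2 h3; split.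
  move=> x y; rewrite /dist !shpE // /shf /clamp; case: d; lia.
case: d; [left|right] => x y; rewrite !shpE // /shf /clamp; lia.
Qed.

Lemma shp_J n k p c d : 1 <= p -> k + p <= n -> c + p <= n -> @J n p (shp n k p c d).
Proof.
move=> h1 h2 h3; split; first exact: shp_ORCT.
split.
  exists (shp n c p k d); split; first exact: shp_ORCT.
  apply/ffunP => x; apply: val_inj; rewrite !tcompE.
  rewrite !shpE // /shf /clamp; case: d; lia.
have n0 : 0 < n by lia.
pose x0 : 'I_n := Ordinal n0.
pose gi (i : 'I_p) : 'I_n := insubd x0 (k + i).
have gE (i : 'I_p) : val (gi i) = k + i.
  by rewrite val_insubd; have := ltn_ord i; case: ifP => //; lia.
rewrite /rank.
have -> : [set shp n k p c d x | x : 'I_n] = [set shp n k p c d (gi i) | i : 'I_p].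
  apply/setP => y; apply/imsetP/imsetP => [[x _ ->]|[i _ ->]]; last by exists (gi i).
  have p0 : 0 < p by lia.
  pose i : 'I_p := insubd (Ordinal p0) (clamp x k (k + p - 1) - k).
  have iE : val i = clamp x k (k + p - 1) - k.
    rewrite val_insubd; case: ifP => //; rewrite /clamp; lia.
  exists i => //; apply: val_inj; rewrite !shpE // gE iE /shf /clamp; case: d; lia.
rewrite card_imset ?card_ord // => i j /(congr1 val).
rewrite !shpE // !gE /shf /clamp => h; apply: val_inj => /=.
have := ltn_ord i; have := ltn_ord j; move: h; case: d; lia.
Qed.

Lemma shp_gen n k p c d : 1 <= p -> p + 2 <= n -> k + p <= n -> c + p <= n ->
  generated (@J n p.+1) (shp n k p c d).
Proof.
move=> h1 h2 h3 h4.
have -> : shp n k p c d = tcomp (tcomp (shp n k.-1 p.+1 0 (0 < k))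
     (shp n 1 p.+1 (if ((0 < c) == ((0 < k) == d)) then 1 else 0) ((0 < c) == ((0 < k) == d))))
     (shp n 0 p.+1 c.-1 (0 < c)).
  apply/ffunP => x; apply: val_inj; rewrite !tcompE.
  have hx := ltn_ord x.
  case: d; case: k h3 => [|k] h3; case: c h4 => [|c] h4 /=;
  rewrite !shpE /shf /clamp /=; try lia.
apply: gen_mul; [apply: gen_mul|]; apply: gen_base; apply: shp_J; try lia.
all: try (case: (_ == _); lia).
all: case: k h3 => [|k] h3 /=; lia.
Qed.

Section NatLemma.
Variables (n : nat) (f g : nat -> nat).
Hypotheses (n0 : 0 < n) (fB : forall j, j < n -> f j < n) (gB : forall y, y < n -> g y < n)
  (Mf : forall i j, i < n -> j < n -> i <= j -> f i <= f j)
  (Cf : forall i j, i < n -> j < n -> dist (f i) (f j) <= dist i j)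
  (Cg : forall i j, i < n -> j < n -> dist (g i) (g j) <= dist i j)
  (R : forall j, j < n -> f (g (f j)) = f j).

Lemma flat x : x.+1 < n -> f x = f x.+1 -> f x = f 0 \/ f x = f n.-1.
Proof.
move=> hx hf.
case: (eqVneq (f x) (f 0)) => [|h0]; first by left.
case: (eqVneq (f x) (f n.-1)) => [|h1]; first by right.
exfalso.
have fxB := fB (ltnW hx).
have f0B : f 0 < n by apply: fB.
have fnB : f n.-1 < n by apply: fB; lia.
have Ra := R n0. have Rb := R (ltnW hx). have Re := @R n.-1 ltac:(lia).
have aB := gB f0B. have bB := gB fxB. have eB := gB fnB.
set a := g (f 0) in Ra aB *. set b := g (f x) in Rb bB *. set e := g (f n.-1) in Re eB *.
have M0x := Mf n0 (ltnW hx) (leq0n x).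
have Mxn := Mf (ltnW hx) (j:=n.-1) ltac:(lia) ltac:(lia).
have Mx1 := Mf hx (j:=n.-1) ltac:(lia) ltac:(lia).
case: (leqP b x) => hb.
- have he : x.+1 < e.
    case: (leqP e x.+1) => // he; have := Mf eB hx he; lia.
  have := Cf bB (ltnW hx); have := Cf hx eB; have := Cg fxB fnB.
  have := Mf bB (ltnW hx) hb; have := Mf hx eB (ltnW he).
  rewrite /dist; lia.
- have ha : a < x.
    case: (leqP x a) => // ha; have := Mf (ltnW hx) aB ha; lia.
  have := Cf aB (ltnW hx); have := Cf hx bB; have := Cg f0B fxB.
  have := Mf aB (ltnW hx) (ltnW ha); have := Mf hx bB hb.
  rewrite /dist; lia.
Qed.

Lemma nat_shape : exists k p c, [/\ 1 <= p, k + p <= n, c + p <= n &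
  forall j, j < n -> f j = shf k p c true j].
Proof.
pose P j := (j < n) && (f j == f 0).
have exP : exists i, P i by exists 0; rewrite /P n0 eqxx.
have ubP : forall i, P i -> i <= n by move=> i /andP[hi _]; lia.
case: (ex_maxnP exP ubP) => k /andP [hk /eqP fk] kmax.
set D := f n.-1 - f 0.
have fnB : f n.-1 < n by apply: fB; lia.
have Mn := Mf n0 (j:=n.-1) ltac:(lia) ltac:(lia).
have low : forall j, j <= k -> f j = f 0.
  move=> j hj; have := @Mf 0 j n0 ltac:(lia) ltac:(lia); have := @Mf j k ltac:(lia) hk hj; lia.
have high : forall j, k + j < n -> f (k + j) = f 0 + minn j D.
  elim => [|j IH] hj; first by rewrite addn0 fk; lia.
  have IH' := IH ltac:(lia).
  have st := Cf (i:=k+j) (j:=k+j.+1) ltac:(lia) hj.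
  have mo := Mf (i:=k+j) (j:=k+j.+1) ltac:(lia) hj ltac:(lia).
  have mn := Mf (i:=k+j.+1) (j:=n.-1) hj ltac:(lia) ltac:(lia).
  move: st; rewrite /dist => st.
  case: (eqVneq (f (k + j)) (f (k + j.+1))) => hfl.
  + have [E|E] := flat (x := k + j) ltac:(lia) ltac:(by rewrite addnS in hfl).
    * have : P (k + j.+1) by rewrite /P hj -hfl E eqxx.
      move/kmax; lia.
    * rewrite -hfl IH'; lia.
  + rewrite IH' in hfl *; lia.
have hD : k + D < n.
  have := high (n.-1 - k) ltac:(lia); rewrite (_ : k + (n.-1 - k) = n.-1); lia.
exists k, D.+1, (f 0); split; try lia.
move=> j hj; rewrite /shf /clamp.
case: (leqP j k) => hjk.
  rewrite low //; lia.
have := high (j - k) ltac:(lia); rewrite (_ : k + (j - k) = j); lia.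
Qed.

End NatLemma.

Lemma J_shp n p (a : trans n) : 0 < n -> @J n p a ->
  exists k c d, [/\ 1 <= p, k + p <= n, c + p <= n & a = shp n k p c d].
Proof.
move=> n0 [[Ca Ma] [[b [[Cb _] E]] Rk]].
pose x0 : 'I_n := Ordinal n0.
have iE j : j < n -> val (insubd x0 j) = j by move=> hj; rewrite val_insubd hj.
pose f j := val (a (insubd x0 j)).
pose g y := val (b (insubd x0 y)).
have fB j : j < n -> f j < n by move=> _; exact: ltn_ord.
have gB j : j < n -> g j < n by move=> _; exact: ltn_ord.
have Cf i j : i < n -> j < n -> dist (f i) (f j) <= dist i j.
  by move=> hi hj; have := Ca (insubd x0 i) (insubd x0 j); rewrite !iE.
have Cg i j : i < n -> j < n -> dist (g i) (g j) <= dist i j.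
  by move=> hi hj; have := Cb (insubd x0 i) (insubd x0 j); rewrite !iE.
have R j : j < n -> f (g (f j)) = f j.
  move=> hj; rewrite /f /g !valKd.
  by have := congr1 (fun h : trans n => val (h (insubd x0 j))) E; rewrite /= !tcompE.
have fx (x : 'I_n) : val (a x) = f x by rewrite /f valKd.
suff [k [p' [c [d [h1 h2 h3 ea]]]]] : exists k p' c d,
    [/\ 1 <= p', k + p' <= n, c + p' <= n & a = shp n k p' c d].
  have := shp_J d h1 h2 h3; rewrite -ea => -[_ [_ Rk']].
  rewrite Rk in Rk'; subst p'; by exists k, c, d.
case: Ma => Ma.
- have Mf i j : i < n -> j < n -> i <= j -> f i <= f j.
    move=> hi hj hij; have := Ma (insubd x0 i) (insubd x0 j); rewrite !iE // => h.
    exact: (h hij).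
  have [k [p' [c [h1 h2 h3 hf]]]] := nat_shape n0 fB gB Mf Cf Cg R.
  exists k, p', c, true; split => //.
  apply/ffunP => x; apply: val_inj; rewrite shpE // fx; exact: hf.
- pose f' j := n.-1 - f j.
  pose g' y := g (n.-1 - y).
  have fB' j : j < n -> f' j < n.
    move=> hj; rewrite /f'. move: (f j) => z. clear -n0. lia.
  have gB' j : j < n -> g' j < n by move=> hj; apply: gB; lia.
  have Mf i j : i < n -> j < n -> i <= j -> f' i <= f' j.
    move=> hi hj hij; have := Ma (insubd x0 i) (insubd x0 j); rewrite !iE // => h.
    have h' : f j <= f i := h hij.
    rewrite /f'; move: h'; move: (f i) (f j) => u v; lia.
  have Cf' i j : i < n -> j < n -> dist (f' i) (f' j) <= dist i j.
    move=> hi hj; have := Cf i j hi hj; have := fB i hi; have := fB j hj; rewrite /f' /dist; lia.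
  have Cg' i j : i < n -> j < n -> dist (g' i) (g' j) <= dist i j.
    move=> hi hj; have := Cg (n.-1 - i) (n.-1 - j) ltac:(lia) ltac:(lia); rewrite /g' /dist; lia.
  have R' j : j < n -> f' (g' (f' j)) = f' j.
    move=> hj; rewrite /f' /g'; have := fB j hj => hb.
    by rewrite (_ : n.-1 - (n.-1 - f j) = f j) ?R //; lia.
  have [k [p' [c [h1 h2 h3 hf]]]] := nat_shape n0 fB' gB' Mf Cf' Cg' R'.
  exists k, p', (n - c - p'), false; split; try lia.
  apply/ffunP => x; apply: val_inj; rewrite shpE; try lia.
  have := hf x (ltn_ord x); have := fB _ (ltn_ord x); rewrite fx /f' /shf /clamp; lia.
Qed.

Theorem proposition18 (n : nat) (hn : 4 <= n) (p : nat) (hp1 : 1 <= p) (hp2 : p <= n - 2)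
  (a : trans n) :
  generated (@J n p) a -> generated (@J n p.+1) a.
Proof.
elim => [b Jb | b c _ IHb _ IHc]; last exact: gen_mul.
have [k [c [d [h1 h2 h3 ->]]]] := J_shp (ltn_trans (isT : 0 < 3) hn) Jb.
apply: shp_gen => //; lia.
Qed.
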